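(* Assume the setup (S) of the context. Let $\phi\colon H\oplus H^*\to\bigwedge^{\mathrm{even}}H$ be the map $x\mapsto x\cdot s$, and let $\phi^*\colon(\bigwedge^{\mathrm{even}}H)^*\to (H\oplus H^* )^*\cong H\oplus H^*$ be its dual (identification via $\beta$). Then $\operatorname{im}\phi^*\subseteq\operatorname{im}\delta_3$. In particular, the element $(s_1,0)\in H\oplus H^*$ lies in $\operatorname{im}\delta_3$, so there exists $u\in B_1^*$ with $\delta_3(u)=(s_1,0)$.
   Context: Setup (S): $R$ is a Noetherian unique factorization domain with $1/2\in R$; $p\ge1$, $q\ge3$, $n=p+2$; $B_0=R^{q-2}$, $B_1=R^{p+q}$, $H=R^n$. On $H\oplus H^*$ let $Q(f,f')=f'(f)$ and $\beta\big((f,f'),(g,g')\big)=f'(g)+g'(f)$, which identifies $(H\oplus H^* )^*$ with $H\oplus H^*$. Let $\mathbb{B}\colon 0\to B_0^*\xrightarrow{\delta_4}B_1^*\xrightarrow{\delta_3}H\oplus H^*\xrightarrow{\delta_2}B_1\xrightarrow{\delta_1}B_0$ be an acyclic complex with $\delta_2=\delta_3^*$ and $\delta_1=\delta_4^*$ (duals taken using $\beta$). The Clifford action of $H\oplus H^*$ on $\bigwedge H$ is $(f,f')\cdot\omega=f\wedge\omega+\iota_{f'}(\omega)$, where $\iota_{f'}(e_1\wedge\cdots\wedge e_j)=\sum_i(-1)^{i-1}f'(e_i)\,e_1\wedge\cdots\widehat{e_i}\cdots\wedge e_j$. Let $s\in\bigwedge^{\mathrm{odd}}H$ (the spinor coordinates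 of $\mathbb{B}$) be an element such that for every prime $\mathfrak p\notin\operatorname{Supp}H_0(\mathbb{B})$, the image of $s$ generates the $R_{\mathfrak p}$-module $\{\omega\in\bigwedge H_{\mathfrak p}: x\cdot\omega=0\ \forall x\in(\operatorname{im}\delta_3)_{\mathfrak p}\}$ (this encodes that $\operatorname{im}\delta_3$ and $H^*$ lie in different families of maximal isotropic subspaces). Let $s_1\in H$ be the degree-one component of $s$. *)

(* Defs.v *)
From HB Require Import structures.
From mathcomp Require Import all_boot all_order all_algebra.
Set Implicit Arguments. Unset Strict Implicit. Unset Printing Implicit Defensive.
Import Order.TTheory GRing.Theory.
Local Open Scope ring_scope.

Section Defs.
Variable R : idomainType.

Definition is_ideal (I : R -> Prop) : Prop :=
  I 0 /\ (forall a b, I a -> I b -> I (a + b)) /\ (forall r a, I a -> I (r * a)).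

Definition is_prime_ideal (P : R -> Prop) : Prop :=
  is_ideal P /\ ~ P 1 /\ (forall a b, P (a * b) -> P a \/ P b).

Definition noetherian_ring : Prop :=
  forall I : nat -> R -> Prop, (forall k, is_ideal (I k)) ->
    (forall k x, I k x -> I k.+1 x) ->
    exists N, forall m, (N <= m)%N -> forall x, I m x -> I N x.

Definition dvdR (a b : R) : Prop := exists c, b = c * a.
Definition assocR (a b : R) : Prop := dvdR a b /\ dvdR b a.
Definition irreducibleR (a : R) : Prop :=
  a != 0 /\ a \isn't a GRing.unit /\
  (forall b c, a = b * c -> b \is a GRing.unit \/ c \is a GRing.unit).

Definition ufd : Prop :=
  (forall a : R, a != 0 -> a \isn't a GRing.unit ->
     exists ps : seq R, (forall x, x \in ps -> irreducibleR x) /\ a = \prod_(x <- ps) x)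
  /\
  (forall ps qs : seq R, (forall x, x \in ps -> irreducibleR x) ->
     (forall x, x \in qs -> irreducibleR x) ->
     assocR (\prod_(x <- ps) x) (\prod_(x <- qs) x) ->
     exists f : 'I_(size ps) -> 'I_(size qs), bijective f /\
       forall i : 'I_(size ps), assocR (nth 0 ps i) (nth 0 qs (f i))).

(** The exterior algebra /\ H of H = R^n, with basis e_S (S subset of 'I_n,
    e_S = e_{s1} /\ ... /\ e_{sk} for s1 < ... < sk); an element is its
    coefficient function. *)
Definition ext (n : nat) := {ffun {set 'I_n} -> R}.

Definition sgnpos n (T : {set 'I_n}) (i : 'I_n) : R :=
  (-1) ^+ #|[set j in T | (j < i)%N]|.

(** Clifford action of H (+) H^* = R^n (+) R^n (a row vector of length n+n,
    first block f in H, second block f' in H^* in dual coordinates) on /\ H: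
    (f,f').w = f /\ w + iota_{f'} w, written out on coefficients. *)
Definition clifford n (x : 'rV[R]_(n + n)) (w : ext n) : ext n :=
  [ffun T : {set 'I_n} =>
     \sum_(i in T) (lsubmx x) 0 i * sgnpos T i * w (T :\ i)
   + \sum_(i in ~: T) (rsubmx x) 0 i * sgnpos T i * w (i |: T)].

Definition beta n (x y : 'rV[R]_(n + n)) : R :=
  \sum_(i < n) ((rsubmx x) 0 i * (lsubmx y) 0 i + (rsubmx y) 0 i * (lsubmx x) 0 i).

Definition pairing m (u v : 'rV[R]_m) : R := \sum_(i < m) u 0 i * v 0 i.

(** Acyclicity of 0 -> B0^* -d4-> B1^* -d3-> H(+)H^* -d2-> B1 -d1-> B0
    (maps act on row vectors by right multiplication). *)
Definition acyclic5 k m l (d4 : 'M[R]_(k, m)) (d3 : 'M[R]_(m, l))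
  (d2 : 'M[R]_(l, m)) (d1 : 'M[R]_(m, k)) : Prop :=
  d4 *m d3 = 0 /\ d3 *m d2 = 0 /\ d2 *m d1 = 0 /\
  (forall v : 'rV_k, v *m d4 = 0 -> v = 0) /\
  (forall v : 'rV_m, v *m d3 = 0 -> exists w : 'rV_k, v = w *m d4) /\
  (forall v : 'rV_l, v *m d2 = 0 -> exists w : 'rV_m, v = w *m d3) /\
  (forall v : 'rV_m, v *m d1 = 0 -> exists w : 'rV_l, v = w *m d2).

(** P is not in Supp(coker d1), i.e. (coker d1)_P = 0: every y/1 vanishes
    in the localization. *)
Definition notin_supp_coker m k (d1 : 'M[R]_(m, k)) (P : R -> Prop) : Prop :=
  forall y : 'rV_k, exists c, ~ P c /\ exists z : 'rV_m, c *: y = z *m d1.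

(** The image of s in /\ H_P generates the R_P-module
    { w in /\ H_P : x.w = 0 for all x in (im d3)_P }, written out with
    fractions (v/a = v'/a' in a localization iff c(a'v - a v') = 0 for some
    c outside P). *)
Definition spinor_generates_at m n (d3 : 'M[R]_(m, n + n)) (s : ext n)
    (P : R -> Prop) : Prop :=
  (* s/1 lies in the module *)
  (forall (b : 'rV_m), exists c, ~ P c /\
      forall S, c * clifford (b *m d3) s S = 0)
  /\
  (* every element w/u of the module is an R_P-multiple (r/t) s of s *)
  (forall (w : ext n) (u : R), ~ P u ->
     (forall (b : 'rV_m), exists c, ~ P c /\
        forall S, c * clifford (b *m d3) w S = 0) ->
     exists r t, ~ P t /\ exists c, ~ P c /\
        forall S, c * (t * w S - u * r * s S) = 0).

(** y lies in the image of phi^* : dual of even part -> dual of H(+)Hdual = H(+)Hdual,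
    where phi(x) = x.s; a linear form on /\^even H is given by its values c S
    on the basis e_S, |S| even. *)
Definition in_im_phistar n (s : ext n) (y : 'rV[R]_(n + n)) : Prop :=
  exists c : {ffun {set 'I_n} -> R}, forall x : 'rV[R]_(n + n),
    beta y x = \sum_(S : {set 'I_n} | ~~ odd #|S|) c S * clifford x s S.

Definition deg1 n (s : ext n) : 'rV[R]_n := \row_i s [set i].

End Defs.

(* Main.v *)
Require Import Defs.
From HB Require Import structures.
From mathcomp Require Import all_boot all_order all_algebra.
Import GRing.Theory.
Local Open Scope ring_scope.

Lemma frac_rep (R : idomainType) (x : {fraction R}) :
  exists a d : R, d != 0 /\ x * (tofrac d) = tofrac a.
Proof.
elim/quotW: x => r.
have hd := denom_ratioP r.
exists (r.1); exists (r.2); split; first exact: hd.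
unlock tofrac.
rewrite !piE.
apply/eqmodP; rewrite /= FracField.equivfE /FracField.mulf.
rewrite !numden_Ratio ?mulr1 ?oner_neq0 //.
by rewrite mulrC.
Qed.

Lemma tofrac_mx_inj (R : idomainType) m n (A B : 'M[R]_(m, n)) :
  map_mx (@tofrac R) A = map_mx (@tofrac R) B -> A = B.
Proof.
move=> /matrixP h; apply/matrixP => i j; have := h i j; rewrite !mxE.
by move/eqP; rewrite tofrac_eq => /eqP.
Qed.

Lemma clear_den (R : idomainType) m n (v : 'M[{fraction R}]_(m, n)) :
  exists d : R, d != 0 /\ exists w : 'M[R]_(m, n), tofrac d *: v = map_mx (@tofrac R) w.
Proof.
have [f hf] := @fin_all_exists _ (fun _ => (R * R)%type)
   (fun ij (ad : R * R) => ad.2 != 0 /\ v ij.1 ij.2 * tofrac ad.2 = tofrac ad.1)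
   (fun ij => let: ex_intro a (ex_intro d h) := @frac_rep R (v ij.1 ij.2) in ex_intro _ (a, d) h).
exists (\prod_ij (f ij).2); split.
  by apply/prodf_neq0 => ij _; case: (hf ij).
exists (\matrix_(i, j) ((f (i, j)).1 * \prod_(ij | ij != (i, j)) (f ij).2)).
apply/matrixP => i j; rewrite !mxE (bigD1 (i, j)) //= rmorphM /= rmorphM /=.
case: (hf (i, j)) => _ /= <-.
by rewrite mulrC -mulrA [_ * tofrac _]mulrC mulrA.
Qed.

Lemma full_transpose (R : idomainType) k m (d4 : 'M[R]_(k, m)) :
  (forall v : 'rV_k, v *m d4 = 0 -> v = 0) ->
  forall y : 'rV[R]_k, exists c, c != 0 /\ exists z : 'rV_m, c *: y = z *m d4^T.
Proof.
move=> hinj y.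
set M := map_mx (@tofrac R) d4.
have hfree : row_free M.
  apply: inj_row_free => v hv.
  have [d [hd [w hw]]] := @clear_den R _ _ v.
  have : w *m d4 = 0.
    apply: tofrac_mx_inj; rewrite map_mxM -hw -scalemxAl hv scaler0 map_mx0 //.
  move/hinj => w0; move: hw; rewrite w0 map_mx0 => /eqP.
  by rewrite scaler_eq0 tofrac_eq0 (negbTE hd) /= => /eqP.
have hfull : row_full M^T by rewrite /row_full mxrank_tr.
have /submxP [D hD] := submx_full (map_mx (@tofrac R) y) hfull.
have [d [hd [w hw]]] := @clear_den R _ _ D.
exists d; split => //; exists w.
apply: tofrac_mx_inj.
by rewrite map_mxZ hD scalemxAl hw map_mxM map_trmx.
Qed.
Theorem mainTheorem7 (R : idomainType) (p q : nat)
  (hp : (1 <= p)%N) (hq : (3 <= q)%N)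
  (HNoeth : noetherian_ring R) (HUFD : ufd R)
  (Hhalf : (2%:R : R) \is a GRing.unit)
  (d4 : 'M[R]_(q - 2, p + q)) (d3 : 'M[R]_(p + q, p.+2 + p.+2))
  (d2 : 'M[R]_(p.+2 + p.+2, p + q)) (d1 : 'M[R]_(p + q, q - 2))
  (Hd2 : forall (x : 'rV[R]_(p.+2 + p.+2)) (b : 'rV[R]_(p + q)),
           pairing (x *m d2) b = beta x (b *m d3))
  (Hd1 : d1 = d4^T)
  (Hacyc : acyclic5 d4 d3 d2 d1)
  (s : ext R p.+2)
  (Hodd : forall S : {set 'I_p.+2}, ~~ odd #|S| -> s S = 0)
  (Hs : forall P : R -> Prop, is_prime_ideal P -> notin_supp_coker d1 P ->
          spinor_generates_at d3 s P) :
  (forall y : 'rV[R]_(p.+2 + p.+2), in_im_phistar s y ->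
     exists b : 'rV[R]_(p + q), y = b *m d3)
  /\ exists u : 'rV[R]_(p + q), u *m d3 = row_mx (deg1 s) 0.
Proof.
pose P0 := fun a : R => a = 0.
have hP0 : is_prime_ideal P0.
  split; [|split].
  - split; first by [].
    split; rewrite /P0.
      by move=> a b -> ->; rewrite addr0.
    by move=> r a ->; rewrite mulr0.
  - by rewrite /P0; apply/eqP; rewrite oner_neq0.
  - by rewrite /P0 => a b /eqP; rewrite mulf_eq0 => /orP [] /eqP; [left|right].
have hsupp : notin_supp_coker d1 P0.
  move=> y; case: Hacyc => _ [_ [_ [hinj _]]].
  have [c [hc [z hz]]] := @full_transpose R _ _ d4 hinj y.
  exists c; split; first by apply/eqP.
  by exists z; rewrite Hd1.
have [hs1 _] := Hs P0 hP0 hsupp.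
have key : forall b S, clifford (b *m d3) s S = 0.
  move=> b S; have [c [hc hcS]] := hs1 b.
  by have /eqP := hcS S; rewrite mulf_eq0 => /orP [/eqP h|/eqP //]; case: hc.
have part1 : forall y : 'rV[R]_(p.+2 + p.+2), in_im_phistar s y ->
     exists b : 'rV[R]_(p + q), y = b *m d3.
  move=> y [c hc].
  case: Hacyc => _ [_ [_ [_ [_ [hex _]]]]].
  apply: hex; apply/rowP => j.
  have := Hd2 y (delta_mx 0 j).
  rewrite hc big1; last by move=> S _; rewrite key mulr0.
  rewrite /pairing (bigD1 j) //= big1 ?addr0.
    by rewrite !mxE !eqxx /= mulr1 => ->; rewrite ?mxE.
  by move=> i /negbTE hij; rewrite !mxE hij andbF mulr0.
split => //.
suff hy : in_im_phistar s (row_mx (deg1 s) 0).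
  by have [b hb] := part1 _ hy; exists b.
exists [ffun S => if S == set0 then 1 else 0] => x.
rewrite (bigD1 set0) ?cards0 //= big1 ?addr0; last first.
  by move=> S /andP [_ /negbTE hS]; rewrite ffunE hS mul0r.
rewrite ffunE eqxx mul1r /clifford ffunE big_pred0; last by move=> i; rewrite inE.
rewrite add0r /beta row_mxKr row_mxKl.
apply: eq_big => [i|i _]; first by rewrite !inE.
rewrite !mxE mul0r add0r /sgnpos setU0.
have -> : [set j in (set0 : {set 'I_p.+2}) | (j < i)%N] = set0.
  by apply/setP => j; rewrite !inE.
by rewrite cards0 expr0 mulr1.
Qed.
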